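(* Let $\Omega=\mathbb{C}[x_1,\dots,x_n]\otimes\wedge\mathbb{C}^n$ be the algebra of polynomial differential forms and let $\mathcal{I}_n$ be its ideal generated by $p_1,\dots,p_n,dp_1,\dots,dp_n$, where $p_j=\sum_ix_i^j$ and $d$ is the exterior derivative. Let $1\le r\le n$ and let $h_r(x_r,\dots,x_n)$ be the complete homogeneous symmetric polynomial of degree $r$ in the variables $x_r,\dots,x_n$. Then for $i=r,\dots,n$, \[ \frac{\partial h_r(x_r,\dots,x_n)}{\partial x_i}\,dx_r\wedge\cdots\wedge dx_n\in\mathcal{I}_n. \] *)

(* Defs.v *)
From HB Require Import structures.
From mathcomp Require Import all_boot all_order all_algebra.
From mathcomp Require Import mpoly.
From mathcomp Require Import complex.
From mathcomp Require Import reals.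

Set Implicit Arguments.
Unset Strict Implicit.
Unset Printing Implicit Defensive.

Import Order.TTheory GRing.Theory Num.Theory.
Local Open Scope ring_scope.

Definition Cx (R : realType) : fieldType := (R[i])%C.

(* Polynomial differential forms Omega = K[x_1..x_n] (x) /\ K^n, represented
   by their coefficients on the basis dx_S (S a subset of 'I_n, increasing
   order of the indices). Variables x_1..x_n are 'X_0 .. 'X_(n-1). *)
Definition form (K : fieldType) (n : nat) := {ffun {set 'I_n} -> {mpoly K[n]}}.

(* sign of dx_S /\ dx_T = sgn(S,T) dx_(S u T) for disjoint S, T:
   (-1)^(number of pairs s in S, t in T with t < s) *)
Definition wsign (K : fieldType) (n : nat) (S T : {set 'I_n}) : {mpoly K[n]} :=
  (-1) ^+ #|[set st : 'I_n * 'I_n | (st.1 \in S) && (st.2 \in T) && (st.2 < st.1)%N]|.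

Definition wedge (K : fieldType) (n : nat) (w v : form K n) : form K n :=
  [ffun U => \sum_(S : {set 'I_n}) \sum_(T : {set 'I_n} |
                 [disjoint S & T] && (S :|: T == U))
               wsign K S T * w S * v T].

Definition form0 (K : fieldType) (n : nat) (f : {mpoly K[n]}) : form K n :=
  [ffun S => if S == set0 then f else 0].

Definition dpoly (K : fieldType) (n : nat) (f : {mpoly K[n]}) : form K n :=
  [ffun S => \sum_(i : 'I_n | S == [set i]) mderiv i f].

Definition psum (K : fieldType) (n : nat) (j : nat) : {mpoly K[n]} :=
  \sum_(i < n) 'X_i ^+ j.

(* membership in the ideal I_n of Omega generated by p_1..p_n, dp_1..dp_n.
   (Omega is graded-commutative and generators homogeneous, so the left ideal
   generated coincides with the two-sided ideal.) *)
Definition in_In (K : fieldType) (n : nat) (w : form K n) : Prop :=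
  exists (a b : 'I_n -> form K n),
    w = \sum_(j < n) (wedge (a j) (form0 (psum K n j.+1))
                      + wedge (b j) (dpoly (psum K n j.+1))).

(* complete homogeneous symmetric polynomial of degree r in x_r,...,x_n,
   i.e. in the variables 'X_k with (r-1) <= k (0-based) *)
Definition hcomp (K : fieldType) (n r : nat) : {mpoly K[n]} :=
  \sum_(m : 'X_{1..n < r.+1} |
          (mdeg m == r) && [forall k : 'I_n, (k < r.-1)%N ==> (m k == 0%N)])
    'X_[(m : 'X_{1..n})].

Definition top_from (K : fieldType) (n r : nat) (f : {mpoly K[n]}) : form K n :=
  [ffun S => if S == [set k : 'I_n | (r.-1 <= k)%N] then f else 0].

(* Main.v *)
Require Import Defs.
From HB Require Import structures.
From mathcomp Require Import all_boot all_order all_algebra.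
From mathcomp Require Import mpoly.
From mathcomp Require Import complex.
From mathcomp Require Import reals.
From mathcomp Require Import zify.
From Stdlib Require Import IndefiniteDescription.
Set Implicit Arguments.
Unset Strict Implicit.
Unset Printing Implicit Defensive.
Import Order.TTheory GRing.Theory Num.Theory.
Local Open Scope ring_scope.

Section Aux.
Variables (K : fieldType) (n : nat).

Definition Pm (m : nat) (v : 'X_{1..n}) : bool :=
  [forall j : 'I_n, (j < m)%N ==> (v j == 0%N)].

Definition HH (m k : nat) : {mpoly K[n]} :=
  \sum_(u : 'X_{1..n < k.+1} |
          (mdeg u == k) && [forall j : 'I_n, (j < m)%N ==> (u j == 0%N)])
    'X_[(u : 'X_{1..n})].

Lemma hcompE r : hcomp K n r = HH r.-1 r.
Proof. by []. Qed.

Lemma coefH m k v : (HH m k)@_v = ((mdeg v == k) && Pm m v)%:R.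
Proof.
rewrite /HH raddf_sum /=.
case: (boolP (mdeg v == k)) => hv /=; last first.
  rewrite big1 // => u /andP [hu _]; rewrite mcoeffX.
  by case: eqP => // e; rewrite -e hu in hv.
have hb : (mdeg v < k.+1)%N by rewrite (eqP hv).
case: (boolP (Pm m v)) => hp.
  rewrite (bigD1 (BMultinom hb)) /=; last by rewrite hv.
  rewrite mcoeffX eqxx big1 ?addr0 // => u /andP [_ hne]; rewrite mcoeffX.
  by case: eqP => // e; case/eqP: hne; apply/val_inj.
rewrite big1 // => u /andP [_ hu]; rewrite mcoeffX.
by case: eqP => // e; rewrite -e in hp; rewrite /Pm hu in hp.
Qed.

Lemma coefXM u (Q : {mpoly K[n]}) v :
  ('X_[u] * Q)@_v = if (u <= v)%MM then Q@_(v - u) else 0.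
Proof.
case: ifP => huv.
  by rewrite -{1}(submK huv) addmC mulrC mcoeffMX.
rewrite mcoeffM big1 // => k /eqP hk; rewrite mcoeffX.
case: eqP => [e|]; last by rewrite mul0r.
by rewrite hk -e lem_addr in huv.
Qed.

Lemma mdeg_sub (u v : 'X_{1..n}) : (u <= v)%MM -> mdeg (v - u) = (mdeg v - mdeg u)%N.
Proof. by move=> h; rewrite -{2}(submK h) mdegD addnK. Qed.

Lemma Pm0 v : Pm 0 v.
Proof. by apply/forallP. Qed.

Lemma PmS (o : 'I_n) v : Pm o.+1 v = Pm o v && (v o == 0%N).
Proof.
apply/forallP/andP => [h|[/forallP h1 h2] j].
  split; last by move: (h o); rewrite ltnSn.
  by apply/forallP => j; apply/implyP => hj; apply: (implyP (h j)); rewrite ltnS ltnW.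
apply/implyP; rewrite ltnS leq_eqVlt => /orP [/eqP e|hj].
  by have -> : j = o by apply/val_inj.
exact: (implyP (h1 j)).
Qed.

Lemma PmB (o : 'I_n) m v : (m <= o)%N -> Pm m (v - U_(o)) = Pm m v.
Proof.
move=> hm; apply: eq_forallb => j; case: (ltnP j m) => //= hj.
rewrite mnmBE mnm1E; case: (o =P j) => [e|_]; last by rewrite /= subn0.
by rewrite -e ltnNge hm in hj.
Qed.

Lemma HH_rec m k (hm : (m < n)%N) : (0 < k)%N ->
  HH m k = HH m.+1 k + 'X_(Ordinal hm) * HH m k.-1.
Proof.
move=> hk; apply/mpolyP => v; set o := Ordinal hm.
rewrite mcoeffD coefXM !coefH.
have -> : m = o by [].
rewrite PmS lep1mP.
case: (boolP (v o == 0%N)) => hv /=.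
  by rewrite andbT addr0.
rewrite !andbF add0r PmB // mdeg_sub ?lep1mP // mdeg1.
have : (0 < mdeg v)%N.
  rewrite lt0n mdeg_eq0; apply/negP => /eqP e; by rewrite e mnm0E in hv.
move=> hd; congr ((_ && _)%:R); apply/eqP/eqP; lia.
Qed.


Lemma sum_lt k a : (\sum_(i < k) (i < a)%N)%N = minn a k.
Proof.
elim: k => [|k IH]; first by rewrite big_ord0 minn0.
rewrite big_ord_recr /= IH; case: (ltnP k a) => h /=; lia.
Qed.

Lemma mnm_le_v (v : 'X_{1..n}) j : (v j <= mdeg v)%N.
Proof. by rewrite mdegE (bigD1 j) //= leq_addr. Qed.

Lemma lemUn (j : 'I_n) c (v : 'X_{1..n}) : ((U_(j) *+ c) <= v)%MM = (c <= v j)%N.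
Proof.
apply/mnm_lepP/idP => [h | h l].
  by move: (h j); rewrite mulmnE mnm1E eqxx mul1n.
by rewrite mulmnE mnm1E; case: (j =P l) => [<-|_]; rewrite ?mul1n ?mul0n.
Qed.

Lemma HH_newton k : (0 < k)%N ->
  HH 0 k *+ k = \sum_(i < k) psum K n i.+1 * HH 0 (k - i.+1).
Proof.
move=> hk; apply/mpolyP => v.
rewrite mcoeffMn coefH Pm0 andbT raddf_sum /=.
under eq_bigr => i _ do rewrite /psum mulr_suml raddf_sum /=.
transitivity (\sum_(i < k) \sum_(j < n) (((i < v j)%N && (mdeg v == k)))%:R : K); last first.
  apply: eq_bigr => i _; apply: eq_bigr => j _.
  rewrite mpolyXn coefXM lemUn; case: ifP => h /=; last by rewrite ?h.
  rewrite coefH Pm0 andbT mdeg_sub ?lemUn // mdegMn mdeg1 mul1n.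
  have h1 := ltn_ord i; have h2 := mnm_le_v v j.
  suff -> : ((mdeg v - i.+1)%N == (k - i.+1)%N) = (mdeg v == k) by [].
  by apply/idP/idP => /eqP ?; apply/eqP; lia.
case: (boolP (mdeg v == k)) => hd; last first.
  rewrite mul0rn big1 // => i _; rewrite big1 // => j _; by rewrite andbF.
transitivity ((\sum_(i < k) \sum_(j < n) (i < v j)%N)%N%:R : K); last first.
  rewrite natr_sum; apply: eq_bigr => i _; rewrite natr_sum.
  by apply: eq_bigr => j _; rewrite andbT.
rewrite exchange_big /=.
under eq_bigr => j _ do rewrite sum_lt.
rewrite -(eqP hd) mdegE mulr1n; congr (_%:R); apply: eq_bigr => j _.
rewrite -mdegE; have := mnm_le_v v j; lia.
Qed.


Definition inJ (f : {mpoly K[n]}) : Prop :=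
  exists c : 'I_n -> {mpoly K[n]}, f = \sum_(j < n) c j * psum K n j.+1.

Lemma inJ0 : inJ 0.
Proof. by exists (fun _ => 0); rewrite big1 // => j _; rewrite mul0r. Qed.

Lemma inJD f g : inJ f -> inJ g -> inJ (f + g).
Proof.
move=> [c ->] [d ->]; exists (fun j => c j + d j).
by rewrite -big_split; apply: eq_bigr => j _; rewrite mulrDl.
Qed.

Lemma inJM g f : inJ f -> inJ (g * f).
Proof.
move=> [c ->]; exists (fun j => g * c j).
by rewrite mulr_sumr; apply: eq_bigr => j _; rewrite mulrA.
Qed.

Lemma inJN f : inJ f -> inJ (- f).
Proof. by move=> h; rewrite -mulN1r; apply: inJM. Qed.

Lemma inJB f g : inJ f -> inJ g -> inJ (f - g).
Proof. by move=> hf hg; apply: inJD => //; apply: inJN. Qed.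

Lemma inJ_sum (I : finType) (P : pred I) (F : I -> {mpoly K[n]}) :
  (forall i, P i -> inJ (F i)) -> inJ (\sum_(i | P i) F i).
Proof.
move=> h; apply: (big_ind inJ) => //; [exact: inJ0 | exact: inJD].
Qed.

Lemma inJ_psum k : (0 < k <= n)%N -> inJ (psum K n k).
Proof.
case/andP => h0 h1; exists (fun j : 'I_n => ((j.+1 == k) : nat)%:R).
have hk : (k.-1 < n)%N by lia.
rewrite (bigD1 (Ordinal hk)) //= big1 ?addr0.
  by rewrite prednK // eqxx mul1r.
move=> j hj; case: eqP => [e|_]; last by rewrite mul0r.
by case/eqP: hj; apply/val_inj => /=; rewrite -e.
Qed.

Hypothesis hchar : forall k, (0 < k)%N -> (k%:R : K) != 0.

Lemma HH0_inJ k : (0 < k <= n)%N -> inJ (HH 0 k).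
Proof.
case/andP => h0 h1.
have -> : HH 0 k = (k%:R^-1 : K) *: (HH 0 k *+ k).
  by rewrite -scaler_nat scalerA mulVf ?scale1r // hchar.
rewrite -mul_mpolyC; apply: inJM; rewrite HH_newton //.
apply: inJ_sum => i _; rewrite mulrC; apply: inJM; apply: inJ_psum.
by have := ltn_ord i; lia.
Qed.

Lemma HH_inJ m k : (m < k <= n)%N -> inJ (HH m k).
Proof.
elim: m k => [|m IH] k hk; first exact: HH0_inJ.
have hm : (m < n)%N by lia.
have hk0 : (0 < k)%N by lia.
have -> : HH m.+1 k = HH m k - 'X_(Ordinal hm) * HH m k.-1.
  by rewrite (HH_rec hm hk0) addrK.
apply: inJB; first by apply: IH; lia.
by apply: inJM; apply: IH; lia.
Qed.


Lemma HH_deriv0 m r (k : 'I_n) : (k < m)%N -> mderiv k (HH m r) = 0.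
Proof.
move=> hk; apply/mpolyP => v; rewrite mcoeff_mderiv coefH mcoeff0.
suff -> : Pm m (v + U_(k)) = false by rewrite andbF mul0rn.
apply/negP => /forallP /(_ k); rewrite hk mnmDE mnm1E eqxx addn1 //.
Qed.

Lemma wsign0 (S : {set 'I_n}) : wsign K S set0 = 1.
Proof.
rewrite /wsign (_ : [set _ | _] = set0) ?cards0 ?expr0 //.
by apply/setP => st; rewrite !inE andbF.
Qed.

Lemma wedge_form0 (w : Defs.form K n) q U : wedge w (form0 q) U = w U * q.
Proof.
rewrite ffunE (bigD1 U) //= [X in _ + X]big1 ?addr0; last first.
  move=> S hS; rewrite big1 // => T /andP [_ /eqP hU]; rewrite ffunE.
  case: (T =P set0) => [e|_]; last by rewrite mulr0.
  by rewrite e setU0 in hU; rewrite hU eqxx in hS.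
rewrite (bigD1 set0) /=; last by rewrite setU0 eqxx andbT disjoints_subset setC0 subsetT.
rewrite ffunE eqxx wsign0 mul1r big1 ?addr0 // => T /andP [_ hT].
by rewrite ffunE (negbTE hT) mulr0.
Qed.

Lemma wedge_single_d (S0 : {set 'I_n}) (g q : {mpoly K[n]}) U :
  wedge [ffun S => if S == S0 then g else 0] (dpoly q) U =
  \sum_(k : 'I_n | (k \notin S0) && (S0 :|: [set k] == U))
     wsign K S0 [set k] * g * mderiv k q.
Proof.
rewrite ffunE (bigD1 S0) //= [X in _ + X]big1 ?addr0; last first.
  move=> S hS; rewrite big1 // => T _.
  by rewrite ffunE (negbTE hS) mulr0 mul0r.
rewrite ffunE eqxx.
under eq_bigr => T _ do rewrite ffunE mulr_sumr.
rewrite (exchange_big_dep (fun k : 'I_n => (k \notin S0) && (S0 :|: [set k] == U))) /=;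
  last by move=> T k /andP [h1 h2] /eqP e; rewrite -disjoints1 disjoint_sym -e h1.
apply: eq_bigr => k /andP [hk hU].
rewrite (big_pred1 [set k]) // => T /=.
case: (T =P [set k]) => [->|_]; last by rewrite andbF.
by rewrite andbT hU disjoint_sym disjoints1 hk.
Qed.


Lemma in_In_of (w : Defs.form K n) (b : 'I_n -> Defs.form K n) :
  (forall U, inJ (w U - (\sum_(j < n) wedge (b j) (dpoly (psum K n j.+1))) U)) ->
  in_In w.
Proof.
move=> h.
pose C U := proj1_sig (constructive_indefinite_description _ (h U)).
have hC U := proj2_sig (constructive_indefinite_description _ (h U)).
exists (fun j => [ffun U => C U j]), b.
apply/ffunP => U; rewrite sum_ffunE.
under eq_bigr => j _ do rewrite ffunE wedge_form0 ffunE.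
rewrite big_split /=.
have := hC U; rewrite -/(C U) sum_ffunE => <-.
by rewrite subrK.
Qed.

Lemma sign_sq (S T : {set 'I_n}) : wsign K S T * wsign K S T = 1.
Proof. by rewrite /wsign -exprD addnn -mul2n exprM sqrrN expr1n expr1n. Qed.

Lemma main_gen r (i : 'I_n) : (1 <= r)%N -> (r <= n)%N -> (r <= i.+1)%N ->
  in_In (top_from r (mderiv i (hcomp K n r))).
Proof.
move=> hr1 hrn hi.
set h := hcomp K n r.
have hJ : inJ h by rewrite /h hcompE; apply: HH_inJ; lia.
case: hJ => f hf.
set S := [set k : 'I_n | (r.-1 <= k)%N].
have iS : i \in S by rewrite inE; lia.
set S0 := S :\ i.
set s := wsign K S0 [set i].
apply: (@in_In_of _ (fun j => [ffun U => if U == S0 then s * f j else 0])).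
move=> U; rewrite sum_ffunE.
under eq_bigr => j _ do rewrite wedge_single_d.
rewrite exchange_big /=.
have key k : \sum_(j < n) wsign K S0 [set k] * (s * f j) * mderiv k (psum K n j.+1)
   = wsign K S0 [set k] * s *
     (mderiv k h - \sum_(j < n) mderiv k (f j) * psum K n j.+1).
  rewrite hf raddf_sum /=.
  have -> : \sum_(j < n) mderiv k (f j * psum K n j.+1) =
      \sum_(j < n) mderiv k (f j) * psum K n j.+1 +
      \sum_(j < n) f j * mderiv k (psum K n j.+1).
    by rewrite -big_split; apply: eq_bigr => j _; rewrite mderivM.
  rewrite addrAC subrr add0r mulr_sumr.
  by apply: eq_bigr => j _; rewrite !mulrA.
under eq_bigr => k _ do rewrite key.
have E : top_from r (mderiv i h) U =
    \sum_(k : 'I_n | (k \notin S0) && (S0 :|: [set k] == U))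
       wsign K S0 [set k] * s * mderiv k h.
  rewrite ffunE; case: (U =P S) => [->|hU].
    rewrite (big_pred1 i) /=; first by rewrite /s sign_sq mul1r.
    move=> k /=; apply/andP/eqP => [[h1 /eqP h2]|->].
      have kS : k \in S by rewrite -h2 !inE eqxx orbT.
      by move: h1; rewrite /S0 in_setD1 kS andbT negbK => /eqP.
    by rewrite /S0 setD11 setUC setD1K.
  rewrite big1 // => k /andP [h1 /eqP h2].
  have kS : k \notin S.
    apply/negP => kS; apply: hU; rewrite -h2.
    move: h1; rewrite /S0 in_setD1 kS andbT negbK => /eqP ->.
    by rewrite /S0 setUC setD1K.
  move: kS; rewrite inE -ltnNge => kS.
  by rewrite /h hcompE HH_deriv0 // mulr0.
rewrite E -sumrB; apply: inJ_sum => k _.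
rewrite -mulrBr opprB addrC subrK; apply: inJM.
by apply: inJ_sum => j _; apply: inJM; apply: inJ_psum; have := ltn_ord j; lia.
Qed.

End Aux.

Theorem lemma18 (R : realType) (n r : nat) (hr1 : (1 <= r)%N) (hrn : (r <= n)%N)
    (i : 'I_n) (hi : (r <= i.+1)%N) :
  in_In (top_from r (mderiv i (hcomp (Cx R) n r))).
Proof.
apply: main_gen => // k hk.
have : (k%:R : R[i]) != 0 by rewrite pnatr_eq0 -lt0n.
by [].
Qed.
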